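(* For each nonnegative integer $n$, \[ \sum_{k=0}^{n} (-1)^k \overline{{n \brack k}}_{q,1} = \begin{cases} 0 &\text{if $n$ is odd,} \\ \sum_{j=-n/2}^{n/2} (-1)^j q^{j^2} &\text{if $n$ is even.} \end{cases} \]
   Context: An overpartition is a partition in which the last occurrence of each distinct part size may be overlined; its weight $|\lambda|$ is the sum of its parts. For integers $0\le k\le n$, $\overline{{n \brack k}}_{q,1}=\sum_{\lambda} q^{|\lambda|}$, the sum over all overpartitions $\lambda$ with largest part at most $n-k$ and at most $k$ parts (i.e. the generating function for overpartitions fitting inside an $(n-k)\times k$ rectangle). *)

(* Defs.v *)
From mathcomp Require Import all_boot all_order all_algebra.
Set Implicit Arguments. Unset Strict Implicit. Unset Printing Implicit Defensive.
Import Order.TTheory GRing.Theory Num.Theory.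
Local Open Scope ring_scope.

(* An overpartition with at most [a] parts and largest part at most [b] is
   encoded as a pair (t, f):
   - t : a.-tuple 'I_b.+1, the parts listed in nonincreasing order, padded
     with zeros to length exactly [a] (the zeros are not parts);
   - f : {ffun 'I_b.+1 -> bool}, the set of part sizes whose last occurrence
     is overlined; only positive sizes actually occurring in t may be flagged.
   This is a bijection with overpartitions fitting in a b x a rectangle. *)
Definition opart_in (a b : nat) (t : a.-tuple 'I_b.+1)
    (f : {ffun 'I_b.+1 -> bool}) : bool :=
  sorted (fun x y : nat => y <= x)%N (map (@nat_of_ord _) t) &&
  [forall i : 'I_b.+1, f i ==> ((0 < (i : nat))%N && (i \in t))].

Definition opart_weight (a b : nat) (t : a.-tuple 'I_b.+1) : nat :=
  (\sum_(i <- t) (i : nat))%N.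

Definition ovgauss (n k : nat) : {poly int} :=
  \sum_(p : k.-tuple 'I_(n - k).+1 * {ffun 'I_(n - k).+1 -> bool}
        | opart_in p.1 p.2) 'X^(opart_weight p.1).

(* Main.v *)
Require Import Defs.
From mathcomp Require Import all_boot all_order all_algebra.
From mathcomp Require Import zify ring.
Import Order.TTheory GRing.Theory Num.Theory.
Local Open Scope ring_scope.
Fixpoint words (n : nat) : seq (seq bool) :=
  if n is n'.+1 then map (cons true) (words n') ++ map (cons false) (words n')
  else [:: [::]].
Definition nN (w : seq bool) : nat := count id w.
Definition nE (w : seq bool) : nat := count negb w.
Fixpoint winv (w : seq bool) : nat :=
  if w is x :: w' then ((if x then nE w' else 0) + winv w')%N else 0%N.
Definition headE (w : seq bool) : bool := if w is x :: _ then ~~ x else false.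
Fixpoint wen (w : seq bool) : nat :=
  if w is x :: w' then ((x && headE w') + wen w')%N else 0%N.
Definition wtw (w : seq bool) : {poly int} := (2 ^ wen w)%:R * 'X^(winv w).
Definition rs (w : seq bool) := rev (map negb w).

Lemma size_words n w : w \in words n -> size w = n.
Proof.
elim: n w => [|n IH] w /=; first by rewrite inE => /eqP ->.
by rewrite mem_cat => /orP[] /mapP[w' /IH <- ->].
Qed.

Lemma nNE w : (nN w + nE w)%N = size w.
Proof. by rewrite /nN /nE -(count_predC id) . Qed.

Lemma sum_wordsS n (F : seq bool -> {poly int}) :
  \sum_(w <- words n.+1) F w =
  \sum_(w <- words n) F (true :: w) + \sum_(w <- words n) F (false :: w).
Proof. by rewrite /= big_cat !big_map. Qed.

Lemma sum_words_cat c m (F : seq bool -> {poly int}) :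
  \sum_(w <- words (c + m)) F w =
  \sum_(u <- words c) \sum_(v <- words m) F (u ++ v).
Proof.
elim: c F => [|c IH] F; first by rewrite add0n /= big_seq1.
rewrite addSn !sum_wordsS !IH.
by [].
Qed.

Lemma winv_cat u v : winv (u ++ v) = (winv u + winv v + nN u * nE v)%N.
Proof.
elim: u => [|x u IH] /=; first by rewrite add0n addn0.
rewrite IH /nN /nE count_cat /=; case: x => /=; lia.
Qed.

Definition lastN (w : seq bool) := last false w.

Lemma wen_cat u v : wen (u ++ v) = (wen u + wen v + (lastN u && headE v))%N.
Proof.
elim: u => [|x u IH] /=; first by rewrite add0n addn0.
rewrite IH; case: u IH => [|y u] IH /=.
  by rewrite /lastN /= andbF !addn0 add0n addnC.
rewrite /lastN /=; lia.
Qed.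

Lemma rs_cons x w : rs (x :: w) = rs w ++ [:: ~~ x].
Proof. by rewrite /rs /= rev_cons cats1. Qed.

Lemma nN_rs w : nN (rs w) = nE w.
Proof. by rewrite /nN /rs count_rev count_map. Qed.
Lemma nE_rs w : nE (rs w) = nN w.
Proof. by rewrite /nE /rs count_rev count_map; apply: eq_count => x; case: x. Qed.
Lemma lastN_rs w : lastN (rs w) = headE w.
Proof. by case: w => [|x w] //; rewrite rs_cons /lastN last_cat. Qed.
Lemma headE_rs w : headE (rs w) = lastN w.
Proof.
elim/last_ind: w => [|w x _] //.
by rewrite /rs map_rcons rev_rcons /lastN last_rcons /= negbK.
Qed.

Lemma winv_rs w : winv (rs w) = winv w.
Proof.
elim: w => [|x w IH] //; rewrite rs_cons winv_cat IH nN_rs /=.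
by case: x => /=; lia.
Qed.

Lemma wen_rs w : wen (rs w) = wen w.
Proof.
elim: w => [|x w IH] //; rewrite rs_cons wen_cat IH lastN_rs /=.
by case: x => /=; lia.
Qed.

Lemma wtw_rs w : wtw (rs w) = wtw w.
Proof. by rewrite /wtw winv_rs wen_rs. Qed.

Lemma rs_cat u v : rs (u ++ v) = rs v ++ rs u.
Proof. by rewrite /rs map_cat rev_cat. Qed.

Lemma sum_words_rs n (F : seq bool -> {poly int}) :
  \sum_(w <- words n) F (rs w) = \sum_(w <- words n) F w.
Proof.
elim: n F => [|n IH] F; first by rewrite /= !big_seq1.
rewrite -addn1 sum_words_cat addn1 sum_wordsS.
under eq_bigr do under eq_bigr do rewrite rs_cat.
rewrite exchange_big /= !big_cons !big_nil !addr0.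
rewrite (IH (fun u => F ([:: false] ++ u))) (IH (fun u => F ([:: true] ++ u))) /=.
by rewrite addrC.
Qed.

Definition Ej (j c : nat) : {poly int} := \sum_(w <- words c | nE w == j) wtw w.
Definition Hj (j c : nat) : {poly int} :=
  \sum_(w <- words c | (nE w == j) && headE w) wtw w.

Lemma wtw_false w : wtw (false :: w) = wtw w.
Proof. by rewrite /wtw /= add0n. Qed.

Lemma wtw_true w : wtw (true :: w) = 'X^(nE w) * ((1 + (headE w)%:R) * wtw w).
Proof.
rewrite /wtw /= expnD natrM exprD; case: (headE w) => /=; ring.
Qed.

Lemma Hj_S j c : Hj j.+1 c.+1 = Ej j c.
Proof.
rewrite /Hj /Ej big_mkcond sum_wordsS /= big1 ?add0r; last by move=> w; rewrite andbF.
rewrite -big_mkcond /=; apply: eq_big => w; first by rewrite andbT.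
by rewrite wtw_false.
Qed.

Lemma Hj0 c : Hj 0 c = 0.
Proof.
case: c => [|c]; first by rewrite /Hj /= big_cons big_nil.
rewrite /Hj big_mkcond sum_wordsS /= !big1 ?addr0 //; by move=> w; rewrite ?andbF.
Qed.

Lemma Hj_c0 j : Hj j 0 = 0.
Proof. by rewrite /Hj /= big_cons big_nil andbF. Qed.

Lemma Ej_S j c :
  Ej j c.+1 = (if j is j'.+1 then Ej j' c else 0) + 'X^j * (Ej j c + Hj j c).
Proof.
rewrite /Ej /Hj big_mkcond sum_wordsS /= addrC; congr (_ + _).
  case: j => [|j]; first by rewrite big1.
  rewrite -big_mkcond; apply: eq_big => w //; by rewrite wtw_false.
rewrite [X in _ = _ * (X + _)]big_mkcond [X in _ = _ * (_ + X)]big_mkcond.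
rewrite -big_split big_distrr /=; apply: eq_bigr => w _; rewrite add0n.
case: eqP => [<-|]; last by rewrite andFb !addr0 mulr0.
rewrite wtw_true /=; case: (headE w) => /=; ring.
Qed.

Lemma Ej_0 j : Ej j 0 = (j == 0)%:R.
Proof. rewrite /Ej /= big_cons big_nil /=; case: j => [|j] //=; by rewrite addr0 /wtw /= mul1r. Qed.

Lemma nE_le w : (nE w <= size w)%N.
Proof. by rewrite -nNE leq_addl. Qed.

Lemma Ej_gt j c : (c < j)%N -> Ej j c = 0.
Proof.
move=> cj; rewrite /Ej big_seq_cond big1 // => w /andP[/size_words sw /eqP ej].
by move: (nE_le w); rewrite ej sw leqNgt cj.
Qed.

Lemma Hj_gt j c : (c < j)%N -> Hj j c = 0.
Proof.
move=> cj; rewrite /Hj big_seq_cond big1 // => w /andP[/size_words sw /andP[/eqP ej _]].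
by move: (nE_le w); rewrite ej sw leqNgt cj.
Qed.

Lemma Ej0 c : Ej 0 c = 1.
Proof. by elim: c => [|c IH]; rewrite ?Ej_0 // Ej_S IH Hj0 add0r addr0 mul1r. Qed.

Lemma Ejj j : Ej j j = 1.
Proof.
elim: j => [|j IH]; first by rewrite Ej_0.
by rewrite Ej_S IH Ej_gt // Hj_gt // addr0 mulr0 addr0.
Qed.

Fixpoint P (a b : nat) : seq (seq nat) :=
  if a is a'.+1 then [seq x :: s | x <- iota 0 b.+1, s <- P a' x] else [:: [::]].
Definition dc (s : seq nat) : nat := size (undup [seq x <- s | (0 < x)%N]).
Definition Wt (s : seq nat) : {poly int} := (2 ^ dc s)%:R * 'X^(sumn s).
Definition GP a b := \sum_(s <- P a b) Wt s.

Lemma P_S a b : P a.+1 b = [seq x :: s | x <- iota 0 b.+1, s <- P a x].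
Proof. by []. Qed.

Lemma P_le a b s : s \in P a b -> all (fun x => x <= b)%N s.
Proof.
elim: a b s => [|a IH] b s; first by rewrite /= inE => /eqP ->.
move=> /allpairsPdep [x [s' [xin s'in ->]]] /=.
move: xin; rewrite mem_iota add0n ltnS => /andP[_ xin]; rewrite xin /=.
apply/allP => y /(allP (IH _ _ s'in)) yx; exact: leq_trans yx _.
Qed.

Lemma dc_cons x s : dc (x :: s) = (dc s + ((0 < x) && (x \notin s)))%N.
Proof.
rewrite /dc /=; case: ifP => x0 /=; last by rewrite addn0.
rewrite mem_filter x0 /=; case: ifP => /=; first by rewrite addn0.
by rewrite addn1.
Qed.

Lemma Wt_cons x s :
  Wt (x :: s) = 'X^x * ((1 + ((0 < x)%N && (x \notin s))%:R) * Wt s).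
Proof.
rewrite /Wt dc_cons /= expnD natrM exprD.
by case: ((0 < x)%N && (x \notin s)) => /=; ring.
Qed.

Lemma GP_0b b : GP 0 b = 1.
Proof. by rewrite /GP /= big_seq1 /Wt /dc /= mul1r. Qed.

Lemma P_a0 a : P a 0 = [:: nseq a 0%N].
Proof. by elim: a => [|a IH] //=; rewrite IH. Qed.

Lemma GP_a0 a : GP a 0 = 1.
Proof.
rewrite /GP P_a0 big_seq1 /Wt.
have -> : dc (nseq a 0%N) = 0%N by elim: a => // a IH; rewrite /= dc_cons IH.
have -> : sumn (nseq a 0%N) = 0%N by elim: a.
by rewrite mul1r.
Qed.

Lemma P_notin a x (F : seq nat -> {poly int}) :
  \sum_(s <- P a x.+1 | x.+1 \notin s) F s = \sum_(s <- P a x) F s.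
Proof.
case: a => [|a]; first by rewrite /= !big_cons !big_nil.
rewrite big_mkcond !P_S !big_allpairs_dep -addn1 iotaD big_cat add0n.
rewrite (_ : iota x.+1 1 = [:: x.+1]) // big_seq1.
rewrite [X in _ + X = _]big1 ?addr0; last by move=> s _; rewrite inE eqxx.
apply: eq_big_seq => y; rewrite mem_iota add0n => /andP[_ yx].
rewrite big_seq_cond [RHS]big_seq_cond; apply: eq_bigr => s /andP[sin _].
rewrite inE; case: eqP => [e|_] /=; first by move: yx; rewrite e ltnn.
have /allP al := P_le _ _ _ sin; case: ifP => //.
move/negbFE => /al h.
by move: (leq_ltn_trans h yx); rewrite ltnn.
Qed.

Lemma GP_S a b :
  GP a.+1 b = \sum_(x <- iota 0 b.+1) \sum_(s <- P a x) Wt (x :: s).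
Proof. by rewrite /GP P_S big_allpairs_dep. Qed.

Lemma GP_SS a b : GP a.+1 b.+1 = GP a.+1 b + 'X^(b.+1) * (GP a b.+1 + GP a b).
Proof.
rewrite !GP_S -(addn1 b.+1) (iotaD 0 b.+1 1) big_cat add0n.
rewrite (_ : iota b.+1 1 = [:: b.+1]) // big_seq1; congr (_ + _).
rewrite /GP -(P_notin a b Wt) [X in _ = _ * (_ + X)]big_mkcond -big_split big_distrr /=.
apply: eq_bigr => s _; rewrite Wt_cons /=; case: (_ \notin _) => /=; ring.
Qed.

Lemma GP_Ej a b : GP a b = Ej b (a + b).
Proof.
elim: a b => [|a IHa] b; first by rewrite GP_0b add0n Ejj.
elim: b => [|b IHb]; first by rewrite GP_a0 Ej0.
rewrite GP_SS IHb !IHa (addnS a.+1) (Ej_S b.+1 (a.+1 + b)) addSn Hj_S addnS.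
by [].
Qed.

Definition srt (s : seq nat) := sorted (fun x y : nat => (y <= x)%N) s.
Arguments srt : simpl never.

Lemma srt_cons x s : srt (x :: s) = all (fun y => y <= x)%N s && srt s.
Proof.
rewrite /srt /= path_sortedE //.
by move=> u v w /= h1 h2; exact: leq_trans h2 h1.
Qed.

Lemma mem_P a b s :
  (s \in P a b) = [&& srt s, size s == a & all (fun x => x <= b)%N s].
Proof.
elim: a b s => [|a IH] b s.
  by rewrite /= inE; case: s => [|x s]; rewrite /= ?eqxx ?andbF.
rewrite P_S.
apply/allpairsPdep/idP.
  move=> [x [s' [xin s'in ->]]]; move: xin s'in.
  rewrite mem_iota add0n ltnS IH => /andP[_ xb] /and3P[ss /eqP <- al] /=.
  rewrite srt_cons al ss eqxx xb /=.
  by apply/allP => y /(allP al) yx; exact: leq_trans yx xb.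
case: s => [|x s] //; rewrite srt_cons => /and3P[/andP[alx ss] sz /andP[xb al]].
exists x, s; split; last by [].
  by rewrite mem_iota add0n ltnS xb.
by rewrite IH ss -eqSS sz alx.
Qed.

Lemma P_uniq a b : uniq (P a b).
Proof.
elim: a b => [|a IH] b //.
rewrite P_S; apply: allpairs_uniq_dep; first exact: iota_uniq.
  by move=> x _; exact: IH.
by move=> [x1 s1] [x2 s2] _ _ /= [e1 e2]; subst.
Qed.

Lemma sum_tuples a b (F : seq nat -> {poly int}) :
  \sum_(t : a.-tuple 'I_b.+1) (if srt (map val t) then F (map val t) else 0)
  = \sum_(s <- P a b) F s.
Proof.
pose f := fun t : a.-tuple 'I_b.+1 => map val (val t).
rewrite -[LHS](big_map f xpredT (fun s => if srt s then F s else 0)).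
rewrite -big_mkcond -big_filter; apply: perm_big; apply: uniq_perm.
- rewrite filter_uniq // map_inj_uniq ?index_enum_uniq //.
  by move=> t1 t2 /(inj_map val_inj) /val_inj.
- exact: P_uniq.
move=> s; rewrite mem_filter mem_P; case: (srt s) => //=.
apply/mapP/andP.
  move=> [t _ ->]; rewrite /f size_map size_tuple eqxx; split => //.
  by apply/allP => x /mapP[i _ ->]; rewrite -ltnS ltn_ord.
move=> [/eqP sz al].
have sz' : size (map (@inord b) s) == a by rewrite size_map sz.
exists (Tuple sz'); first by rewrite mem_index_enum.
rewrite /f /= -map_comp map_id_in // => x /(allP al) xb /=.
by rewrite inordK // ltnS.
Qed.

Lemma card_flags (b : nat) (Q : pred 'I_b.+1) :
  #|[pred f : {ffun 'I_b.+1 -> bool} | [forall i, f i ==> Q i]]| = (2 ^ #|Q|)%N.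
Proof.
have -> : (2 = #|@predT bool|)%N by rewrite card_bool.
rewrite -(card_pffun_on false Q); apply: eq_card => f /=; rewrite !inE.
apply/forallP/pffun_onP.
  move=> H; split; last by move=> y _.
  apply/subsetP => i; rewrite inE; move: (H i); case: (f i) => //=.
move=> [/subsetP H _] i; apply/implyP => fi; apply: H; by rewrite inE fi.
Qed.

Lemma card_dc a b (t : a.-tuple 'I_b.+1) :
  #|[pred i : 'I_b.+1 | (0 < i)%N && (i \in t)]| = dc (map val t).
Proof.
rewrite cardE -(size_map val) /dc; apply: perm_size; apply: uniq_perm.
- by rewrite map_inj_uniq ?enum_uniq //; exact: val_inj.
- exact: undup_uniq.
move=> x; rewrite mem_undup mem_filter; apply/mapP/andP.
  move=> [i]; rewrite mem_enum inE => /andP[i0 it] ->; split => //.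
  by rewrite (mem_map val_inj).
move=> [x0 /mapP[i it ex]]; exists i => //; by rewrite mem_enum inE -ex x0 it.
Qed.

Lemma OG_GP a b :
  \sum_(p : a.-tuple 'I_b.+1 * {ffun 'I_b.+1 -> bool} | opart_in p.1 p.2)
     'X^(opart_weight p.1) = GP a b.
Proof.
transitivity (\sum_(t : a.-tuple 'I_b.+1) \sum_(f | opart_in t f)
                 ('X^(opart_weight t) : {poly int})).
  by rewrite pair_big_dep.
rewrite /GP -sum_tuples; apply: eq_bigr => t _.
rewrite /opart_in.
have -> : sorted (fun x y : nat => (y <= x)%N) (map (@nat_of_ord _) t) = srt (map val t)
  by [].
case: ifP => _; last by rewrite big_pred0.
rewrite (eq_bigl [pred f : {ffun 'I_b.+1 -> bool} |
         [forall i, f i ==> [pred i : 'I_b.+1 | (0 < i)%N && (i \in t)] i]]) //.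
rewrite sumr_const card_flags card_dc /Wt mulr_natl.
by rewrite /opart_weight sumnE big_map.
Qed.

Definition eqK (K : nat) (p q : {poly {poly int}}) := forall i, (i < K)%N -> p`_i = q`_i.

Lemma eqK_mul K p p' q q' : eqK K p p' -> eqK K q q' -> eqK K (p * q) (p' * q').
Proof.
move=> hp hq i iK; rewrite !coefM; apply: eq_bigr => k _.
have ki : (k <= i)%N by rewrite -ltnS ltn_ord.
rewrite hp ?hq //; last exact: leq_ltn_trans ki iK.
exact: leq_ltn_trans (leq_subr _ _) iK.
Qed.

Lemma eqK_cancel K (c : {poly int}) (D : {poly {poly int}}) :
  (forall i, (i < K)%N -> ((1 - c%:P * 'X^2) * D)`_i = 0) ->
  forall i, (i < K)%N -> D`_i = 0.
Proof.
move=> h i; elim/ltn_ind: i => i IH iK.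
move: (h i iK); rewrite mulrBl mul1r coefB -mulrA coefCM coefXnM.
case: ltnP => [_|i2]; first by rewrite mulr0 subr0.
have h1 : (i - 2 < i)%N by rewrite -subn_gt0 subKn // (leq_trans _ i2).
have h2 : (i - 2 < K)%N by exact: ltn_trans h1 iK.
by rewrite (IH (i - 2)%N) // mulr0 subr0.
Qed.

Definition trunc K (s : nat -> {poly int}) : {poly {poly int}} := \poly_(i < K) s i.

Lemma coef_Xtrunc K s i : (i < K)%N ->
  ('X * trunc K s)`_i = if i is i'.+1 then s i' else 0.
Proof.
move=> iK; rewrite coefXM; case: i iK => [|i] iK //=.
by rewrite coef_poly (ltnW iK).
Qed.

Lemma coef_trunc K s i : (i < K)%N -> (trunc K s)`_i = s i.
Proof. by move=> iK; rewrite coef_poly iK. Qed.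

Lemma Hj_Sj j c : Hj j.+1 c = if c is c'.+1 then Ej j c' else 0.
Proof. by case: c => [|c]; rewrite ?Hj_c0 ?Hj_S. Qed.

Definition sg (c : nat) : {poly int} := (-1) ^+ c.

Lemma H1 K j :
  let a := ('X^(j.+1) : {poly int}) in
  eqK K ((1 - a%:P * 'X) * trunc K (Ej j.+1))
        ('X * (trunc K (Ej j) + a%:P * ('X * trunc K (Ej j)))).
Proof.
move=> a i iK.
rewrite mulrBl mul1r coefB -mulrA coefCM coef_Xtrunc // coef_trunc //.
rewrite coefXM coefD coefCM.
case: i iK => [|i] iK /=; first by rewrite Ej_gt // mulr0 subr0.
have iK' : (i < K)%N := ltnW iK.
rewrite coef_trunc // coef_Xtrunc //.
by rewrite Ej_S Hj_Sj /a; case: i iK iK' => [|i] iK iK'; ring.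
Qed.

Lemma H2 K j :
  let a := ('X^(j.+1) : {poly int}) in
  eqK K ((1 + a%:P * 'X) * trunc K (fun c => sg c * Ej j.+1 c))
        (- ('X * (trunc K (fun c => sg c * Ej j c)
                  - a%:P * ('X * trunc K (fun c => sg c * Ej j c))))).
Proof.
move=> a i iK.
rewrite mulrDl mul1r coefD -mulrA coefCM coef_Xtrunc // coef_trunc //.
rewrite coefN coefXM coefB coefCM.
case: i iK => [|i] iK /=; first by rewrite Ej_gt // /sg !mulr0 addr0 oppr0.
have iK' : (i < K)%N := ltnW iK.
rewrite coef_trunc // coef_Xtrunc //.
rewrite Ej_S Hj_Sj /a /sg; case: i iK iK' => [|i] iK iK'; rewrite ?exprS; ring.
Qed.

Definition pj j n := \sum_(c < n.+1) Ej j c * (sg (n - c)%N * Ej j (n - c)%N).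

Lemma coef_trunc_mul K u v m : (m < K)%N ->
  (trunc K u * trunc K v)`_m = \sum_(c < m.+1) u c * v (m - c)%N.
Proof.
move=> mK; rewrite coefM; apply: eq_bigr => c _.
have cm : (c <= m)%N by rewrite -ltnS ltn_ord.
have h1 : (c < K)%N := leq_ltn_trans cm mK.
have h2 : (m - c < K)%N := leq_ltn_trans (leq_subr _ _) mK.
by rewrite !coef_trunc.
Qed.

Lemma pj_rec j n : pj j.+1 n = - (if n is n'.+2 then pj j n' else 0).
Proof.
pose K := n.+1; pose a := ('X^(j.+1) : {poly int}).
pose e' := trunc K (Ej j.+1); pose f' := trunc K (fun c => sg c * Ej j.+1 c).
pose e := trunc K (Ej j); pose f := trunc K (fun c => sg c * Ej j c).
have M := eqK_mul _ _ _ _ _ (H1 K j) (H2 K j).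
have D : forall i, (i < K)%N ->
    ((1 - (a ^+ 2)%:P * 'X^2) * (e' * f' + 'X^2 * (e * f)))`_i = 0.
  move=> i iK; have := M i iK; rewrite -/a -/e -/f -/e' -/f' => Mi.
  rewrite (_ : (1 - (a ^+ 2)%:P * 'X^2) * (e' * f' + 'X^2 * (e * f)) =
     (1 - a%:P * 'X) * e' * ((1 + a%:P * 'X) * f') -
     'X * (e + a%:P * ('X * e)) * - ('X * (f - a%:P * ('X * f)))).
    by rewrite coefB Mi subrr.
  by rewrite polyC_exp; ring.
have key : pj j.+1 n + (if (n < 2)%N then 0 else pj j (n - 2)%N) = 0.
  have := eqK_cancel _ _ _ D _ (leqnn K).
  rewrite /e' /f' /e /f coefD coef_trunc_mul // coefXnM => H; rewrite -[RHS]H; congr (_ + _).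
  case: ltnP => // n2; rewrite coef_trunc_mul //.
  by rewrite /K; apply: (leq_ltn_trans (leq_subr _ _)).
clear -key; case: n key => [|[|n]] /=.
- by rewrite addr0 => ->; rewrite oppr0.
- by rewrite addr0 => ->; rewrite oppr0.
by move=> /eqP; rewrite addr_eq0 subn2 /= => /eqP.
Qed.

Lemma sgS k : sg k.+1 = - sg k.
Proof. by rewrite /sg exprS mulN1r. Qed.

Lemma sum_sg n : \sum_(c < n.+1) sg (n - c)%N = (~~ odd n)%:R.
Proof.
elim: n => [|n IH]; first by rewrite big_ord_recl big_ord0 addr0.
rewrite big_ord_recr /= subnn.
rewrite (eq_bigr (fun c : 'I_n.+1 => - sg (n - c)%N)); last first.
  by move=> c _ /=; rewrite subSn ?sgS // -ltnS ltn_ord.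
rewrite sumrN IH /=; case: (odd n) => /=; rewrite /sg expr0 ?oppr0 ?add0r ?addNr //.
Qed.

Lemma pj0 n : pj 0 n = (~~ odd n)%:R.
Proof.
rewrite /pj -sum_sg; apply: eq_bigr => c _; by rewrite !Ej0 mul1r mulr1.
Qed.

Lemma pj_closed j n :
  pj j n = if ~~ odd n && (2 * j <= n)%N then sg j else 0.
Proof.
elim: j n => [|j IH] n.
  by rewrite pj0 muln0 leq0n andbT /sg expr0; case: (odd n).
rewrite pj_rec; case: n => [|[|n]] /=; [by rewrite oppr0 | by rewrite oppr0 |].
rewrite mulnS -add2n leq_add2l IH negbK sgS.
case: (odd n) => /=; first by rewrite oppr0.
by case: (_ <= _)%N; rewrite ?oppr0.
Qed.

Definition hj j n := \sum_(c < n.+1) Hj j c * (sg (n - c)%N * Hj j (n - c)%N).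

Lemma hj0 n : hj 0 n = 0.
Proof. by rewrite /hj big1 // => c _; rewrite Hj0 mul0r. Qed.

Lemma hjS j n : hj j.+1 n = pj j.+1 n.
Proof.
rewrite pj_rec /hj; case: n => [|[|m]].
- by rewrite big_ord_recl big_ord0 Hj_c0 mul0r addr0 oppr0.
- by rewrite big_ord_recr big_ord_recl big_ord0 /= !Hj_c0 mul0r !mulr0 !addr0 oppr0.
rewrite big_ord_recl Hj_c0 mul0r add0r big_ord_recr /= subnn Hj_c0 !mulr0 addr0.
rewrite /pj -sumrN; apply: eq_bigr => c _.
have cm : (c <= m)%N by rewrite -ltnS ltn_ord.
rewrite /bump /= add1n !subSS subSn // !Hj_Sj sgS; ring.
Qed.

Lemma sum_eq1 (N k : nat) (G : nat -> {poly int}) : (k < N)%N ->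
  \sum_(j < N) (if k == j then G j else 0) = G k.
Proof.
move=> kN; rewrite (bigD1 (Ordinal kN)) //= eqxx big1 ?addr0 // => j /negbTE.
by rewrite -(inj_eq val_inj) /= eq_sym => ->.
Qed.

Lemma Ej_mk j c : Ej j c = \sum_(u <- words c) (if nE u == j then wtw u else 0).
Proof. by rewrite /Ej big_mkcond. Qed.

Lemma Hj_mk j c :
  Hj j c = \sum_(u <- words c) (if (nE u == j) && headE u then wtw u else 0).
Proof. by rewrite /Hj big_mkcond. Qed.

Lemma Ej_rs j c : Ej j c = \sum_(u <- words c) (if nN u == j then wtw u else 0).
Proof.
rewrite /Ej big_mkcond -(sum_words_rs c (fun u => if nN u == j then wtw u else 0)).
by apply: eq_bigr => u _; rewrite nN_rs wtw_rs.
Qed.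

Lemma Hj_rs j c :
  Hj j c = \sum_(u <- words c) (if (nN u == j) && lastN u then wtw u else 0).
Proof.
rewrite /Hj big_mkcond.
rewrite -(sum_words_rs c (fun u => if (nN u == j) && lastN u then wtw u else 0)).
by apply: eq_bigr => u _; rewrite nN_rs lastN_rs wtw_rs.
Qed.

Lemma wtw_cat u v : wtw (u ++ v) =
  'X^(nN u * nE v) * (wtw u * wtw v * (1 + (lastN u && headE v)%:R)).
Proof.
rewrite /wtw wen_cat winv_cat !expnD !natrM !exprD.
by case: (lastN u && headE v) => /=; ring.
Qed.

Lemma cut_inner c m :
  \sum_(u <- words c) \sum_(v <- words m)
     (if nE (u ++ v) == c then sg (nN (u ++ v)) * wtw (u ++ v) else 0)
  = \sum_(j < (c + m).+1) 'X^(j * j) *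
       (Ej j c * (sg m * Ej j m) + Hj j c * (sg m * Hj j m)).
Proof.
have E : forall j, Ej j c * (sg m * Ej j m) + Hj j c * (sg m * Hj j m) =
  \sum_(u <- words c) \sum_(v <- words m)
    (sg m * ((if nN u == j then wtw u else 0) * (if nE v == j then wtw v else 0)
     + (if (nN u == j) && lastN u then wtw u else 0) *
       (if (nE v == j) && headE v then wtw v else 0))).
  move=> j; rewrite (Ej_rs j c) (Hj_rs j c) (Ej_mk j m) (Hj_mk j m).
  rewrite !mulrA ![_ * sg m]mulrC -!mulrA -mulrDr.
  under [RHS]eq_bigr => u _ do rewrite -big_distrr /=.
  rewrite -big_distrr /=; congr (_ * _).
  rewrite !big_distrl -big_split /=; apply: eq_bigr => u _.
  by rewrite !big_distrr -big_split.
under [RHS]eq_bigr => j _ do rewrite E big_distrr /=.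
rewrite [RHS]exchange_big /=; apply: eq_big_seq => u uin.
under [RHS]eq_bigr do rewrite big_distrr /=.
rewrite [RHS]exchange_big /=; apply: eq_big_seq => v vin.
have su := size_words _ _ uin; have sv := size_words _ _ vin.
have hu := nNE u; have hv := nNE v.
have nu : (nN u < (c + m).+1)%N by move: hu; rewrite su ltnS; lia.
pose G := fun j => if nE v == j then
   'X^(j * j) * (sg m * (wtw u * wtw v * (1 + (lastN u && headE v)%:R))) else 0.
transitivity (\sum_(j < (c + m).+1) (if nN u == j then G j else 0)); last first.
  apply: eq_bigr => j _; rewrite /G.
  case: (nN u =P j) => [<-|_]; last by rewrite andFb !(mul0r, mulr0, addr0).
  rewrite /=; case: (nE v == nN u); last by rewrite andFb !(mul0r, mulr0, addr0).
  by case: (lastN u); case: (headE v) => /=; ring.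
rewrite sum_eq1 // /G.
have -> : (nE (u ++ v) == c) = (nE v == nN u).
  rewrite /nE count_cat -/(nE u) -/(nE v); move: hu; rewrite su => hu'.
  by apply/eqP/eqP; lia.
case: (nE v =P nN u) => [e|_] //.
rewrite wtw_cat e.
have -> : nN (u ++ v) = m.
  by rewrite /nN count_cat -/(nN u) -/(nN v) -e addnC; move: hv; rewrite sv.
by rewrite mulrCA.
Qed.

Lemma LHS_S n : \sum_(k < n.+1) (-1) ^+ k * ovgauss n k =
  \sum_(w <- words n) sg (nN w) * wtw w.
Proof.
transitivity (\sum_(k < n.+1) sg k * Ej (n - k)%N n).
  apply: eq_bigr => k _; rewrite /ovgauss OG_GP GP_Ej subnKC //.
  by rewrite -ltnS ltn_ord.
under eq_bigr do rewrite Ej_mk big_distrr /=.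
rewrite exchange_big /=; apply: eq_big_seq => w win.
have sw := size_words _ _ win; have hw := nNE w.
have nw : (nN w < n.+1)%N by move: hw; rewrite sw ltnS; lia.
symmetry; rewrite -(sum_eq1 _ _ (fun k => sg k * wtw w) nw).
apply: eq_bigr => k _.
have kn : (k <= n)%N by rewrite -ltnS ltn_ord.
have -> : (nE w == (n - k)%N) = (nN w == k) by move: hw; rewrite sw => hw'; apply/eqP/eqP; lia.
by case: (nN w == k); rewrite ?mulr0.
Qed.

Lemma S_cut n : \sum_(w <- words n) sg (nN w) * wtw w =
  \sum_(j < n.+1) 'X^(j * j) * (pj j n + hj j n).
Proof.
transitivity (\sum_(c < n.+1) \sum_(w <- words n)
                 (if nE w == c then sg (nN w) * wtw w else 0)).
  rewrite exchange_big /=; apply: eq_big_seq => w win.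
  have sw := size_words _ _ win.
  have nw : (nE w < n.+1)%N by rewrite ltnS -sw nE_le.
  by symmetry; exact: (sum_eq1 _ _ (fun _ => sg (nN w) * wtw w) nw).
transitivity (\sum_(c < n.+1) \sum_(j < n.+1) 'X^(j * j) *
   (Ej j c * (sg (n - c)%N * Ej j (n - c)%N) + Hj j c * (sg (n - c)%N * Hj j (n - c)%N))).
  apply: eq_bigr => c _.
  have cn : (c <= n)%N by rewrite -ltnS ltn_ord.
  rewrite -[in words n](subnKC cn) sum_words_cat cut_inner subnKC //.
rewrite exchange_big /=; apply: eq_bigr => j _.
by rewrite -mulr_sumr big_split.
Qed.

Lemma rhs_even m (g : nat -> {poly int}) :
  \sum_(i < (m.*2).+1) g `|(i : nat)%:Z - m%:Z|%N =
  \sum_(j < m.+1) g j + \sum_(j < m) g j.+1.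
Proof.
have e : ((m.*2).+1 = m.+1 + m)%N by rewrite -addnn addSn.
rewrite e big_split_ord /=; congr (_ + _).
  rewrite (reindex_inj rev_ord_inj) /=; apply: eq_bigr => i _; congr g.
  have im : (i <= m)%N by rewrite -ltnS ltn_ord.
  rewrite distnEr ?subSS ?subKn // leq_subr //.
apply: eq_bigr => i _; congr g.
rewrite distnEl; first by rewrite addSn -addnS addKn.
by rewrite addSn ltnW // ltnS leq_addr.
Qed.

Theorem theorem1p3 (n : nat) :
  \sum_(k < n.+1) (-1) ^+ k * ovgauss n k =
  (if odd n then 0
   else \sum_(i < n.+1)
          (-1) ^+ `|(i : nat)%:Z - (n./2)%:Z|%N
          * 'X^(`|(i : nat)%:Z - (n./2)%:Z| ^ 2)%N).
Proof.
rewrite LHS_S S_cut.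
have T : forall j, pj j n + hj j n =
    if ~~ odd n && (2 * j <= n)%N then sg j * (1 + (0 < j)%:R) else 0.
  case=> [|j]; first by rewrite hj0 addr0 pj_closed /= addr0 mulr1.
  rewrite hjS pj_closed; case: ifP => _; last by rewrite addr0.
  by rewrite /=; ring.
under eq_bigr do rewrite T.
case: (boolP (odd n)) => on /=.
  by rewrite big1 // => j _; rewrite mulr0.
set m := n./2.
have en : n = m.*2 by rewrite -[LHS]odd_double_half (negbTE on) add0n.
clearbody m; subst n.
have R := rhs_even m (fun j => (-1) ^+ j * 'X^(j ^ 2)); rewrite /= in R.
rewrite R.
have e : ((m.*2).+1 = m.+1 + m)%N by rewrite -addnn addSn.
rewrite e big_split_ord /= [X in _ + X]big1 ?addr0; last first.
  move=> i _; rewrite mul2n leq_double leqNgt ltnS leq_addr /=; by rewrite mulr0.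
under eq_bigr => i _ do rewrite mul2n leq_double -ltnS ltn_ord.
rewrite (eq_bigr (fun i : 'I_m.+1 => (-1) ^+ i * 'X^(i ^ 2) +
          (0 < i)%N%:R * ((-1) ^+ i * 'X^(i ^ 2)))); last first.
  by move=> i _; rewrite /sg -mulnn; ring.
rewrite big_split /=; congr (_ + _).
rewrite big_ord_recl /= mul0r add0r; apply: eq_bigr => i _.
by rewrite /bump /= add1n mul1r.
Qed.
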